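(* Let $q,m$ be positive integers with $q\ge 2$. Let $\mathbf{B}^{q,m}=[b_{j,k}]$ be the $(q-1)q^m\times q(m+1)$ array with rows indexed by $j\in[0,(q-1)q^m)$ and columns by $k\in[0,q(m+1))$, defined as follows. Write $j=(j_m,j_{m-1},\dots,j_0)_q$ (so $j_m\in[0,q-1)$) and $k=uq+v$ with $0\le u\le m$, $0\le v<q$. If $0\le u<m$: $$b_{j,k}=\begin{cases} (j_{m-1},\dots,j_{u+1},\ j_u+j_m+1,\ j_{u-1},\dots,j_0)_q, & j_u=v,\\ *, & j_u\ne v.\end{cases}$$ If $u=m$: $$b_{j,k}=\begin{cases} (j_{m-1},\dots,j_0)_q, & j_0+\cdots+j_{m-1}+j_m=v-1,\\ *, & j_0+\cdots+j_{m-1}+j_m\ne v-1,\end{cases}$$ where all additions and subtractions of digits (including in the conditions) are performed modulo $q$ (with results in $[0,q)$). Then $\mathbf{B}^{q,m}$ is a $(q-1)(m+1)$-regular $(q(m+1),\,(q-1)q^m,\,(q-1)^2q^{m-1},\,q^m)$ PDA, and its rate $S/F$ equals $1/(q-1)$.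
   Context: Notation: $[i,j)=\{i,\dots,j-1\}$. For an integer $s$ with $s=\sum_{l=0}^{n-1}s_lq^l$, $s_l\in[0,q)$, we write $s=(s_{n-1},\dots,s_0)_q$ (the $q$-ary representation; the leftmost digit is most significant). For positive integers $K,F,Z,S$ and an integer $g$, an $F\times K$ array $\mathbf{P}=[p_{j,k}]$ whose entries are either a special symbol $*$ or one of the integers $0,1,\dots,S-1$ is a $g$-regular $(K,F,Z,S)$ PDA if: (C1) the symbol $*$ appears exactly $Z$ times in each column; (C2') each integer in $[0,S)$ appears exactly $g$ times in $\mathbf{P}$; (C3) for any two distinct entries with $p_{j_1,k_1}=p_{j_2,k_2}=s$ an integer, we have $j_1\neq j_2$, $k_1\neq k_2$, and $p_{j_1,k_2}=p_{j_2,k_1}=*$. The rate of such a PDA (i.e. of its associated caching scheme) is $R=S/F$. *)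

(* Defs.v *)
From mathcomp Require Import all_boot all_order all_algebra.
Set Implicit Arguments. Unset Strict Implicit. Unset Printing Implicit Defensive.

(* An F x K array: rows j < F, columns k < K; entry None = '*', Some s = integer s. *)
Definition array := nat -> nat -> option nat.

Definition regular_PDA (g K F Z S : nat) (P : array) : Prop :=
  [/\ (forall (j : 'I_F) (k : 'I_K),
         if P j k is Some s then s < S else true),
      (forall k : 'I_K, #|[set j : 'I_F | P j k == None]| = Z),
      (forall s, s < S ->
         #|[set jk : 'I_F * 'I_K | P jk.1 jk.2 == Some s]| = g) &
      (forall (j1 j2 : 'I_F) (k1 k2 : 'I_K) (s : nat),
         (j1, k1) <> (j2, k2) -> P j1 k1 = Some s -> P j2 k2 = Some s ->
         [/\ j1 <> j2, k1 <> k2, P j1 k2 = None & P j2 k1 = None])].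

Definition rate (F S : nat) : rat := (S%:Q / F%:Q)%R.

Definition digit (q j l : nat) : nat := (j %/ q ^ l) %% q.

Definition B (q m : nat) : array := fun j k =>
  let u := k %/ q in
  let v := k %% q in
  if u < m then
    if digit q j u == v then
      Some (\sum_(l < m)
              (if l == u :> nat then (digit q j u + digit q j m + 1) %% q
               else digit q j l) * q ^ l)
    else None
  else
    if (\sum_(l < m.+1) digit q j l) %% q == (v + q - 1) %% q then
      Some (\sum_(l < m) digit q j l * q ^ l)
    else None.

(* Main.v *)
Require Import Defs.
From mathcomp Require Import all_boot all_order all_algebra.
From mathcomp Require Import zify ring.
Set Implicit Arguments. Unset Strict Implicit.

Section Arith.
Variable q : nat.
Hypothesis hq : 2 <= q.

Lemma q0 : 0 < q. Proof. lia. Qed.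
Lemma qX0 n : 0 < q ^ n. Proof. by rewrite expn_gt0 q0. Qed.

Lemma digit_lt j l : digit q j l < q.
Proof. by rewrite /digit ltn_pmod // q0. Qed.

Lemma modX_rec j m : j %% q ^ m.+1 = j %% q ^ m + digit q j m * q ^ m.
Proof.
rewrite /digit.
have hX := qX0 m.
set X := q ^ m.
have -> : q ^ m.+1 = X * q by rewrite expnS mulnC.
have e1 := divn_eq j X.
have e2 := divn_eq (j %/ X) q.

have hr : j %% X + (j %/ X) %% q * X < X * q.
  have := ltn_pmod j hX; have := ltn_pmod (j %/ X) q0.
  move=> h1 h2. have: (j %/ X) %% q <= q.-1 by rewrite -ltnS prednK ?q0.
  move=> h3. have: (j %/ X) %% q * X <= q.-1 * X by rewrite leq_mul2r h3 orbT.
  move=> h4. have : q.-1 * X + X = X * q by rewrite mulnC -mulnSr prednK ?q0.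
  lia.
rewrite {1}e1 {1}e2 mulnDl -mulnA (mulnC q X). idtac.
rewrite -addnA modnMDl modn_small //; last by rewrite addnC.
by rewrite addnC.
Qed.

Lemma mod_digits j m : j %% q ^ m = \sum_(l < m) digit q j l * q ^ l.
Proof.
elim: m => [|m IH]; first by rewrite big_ord0 expn0 modn1.
by rewrite big_ord_recr /= modX_rec IH.
Qed.

Lemma sum_lt m (f : nat -> nat) : (forall l, l < m -> f l < q) ->
  \sum_(l < m) f l * q ^ l < q ^ m.
Proof.
elim: m => [|m IH] hf; first by rewrite big_ord0 expn0.
rewrite big_ord_recr /=.
have h1 : \sum_(i < m) f i * q ^ i < q ^ m by apply: IH => l hl; apply: hf; lia.
have h2 : f m <= q.-1 by rewrite -ltnS prednK ?q0 // hf.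
have h3 : f m * q ^ m <= q.-1 * q ^ m by rewrite leq_mul2r h2 orbT.
have h4 : q.-1 * q ^ m + q ^ m = q ^ m.+1.
  rewrite expnS. have := prednK q0. move: (q.-1) => p <-. by rewrite mulSn addnC.
move: h1 h3 h4; set a := \sum_(_ < _) _; set b := f m * _; set c := q.-1 * _; set d := q ^ m.+1; lia.
Qed.

Lemma digit_sum m (f : nat -> nat) i : (forall l, l < m -> f l < q) -> i < m ->
  digit q (\sum_(l < m) f l * q ^ l) i = f i.
Proof.
elim: m => [|m IH] hf hi //.
rewrite big_ord_recr /=.
have hl : forall l, l < m -> f l < q by move=> l hl; apply: hf; lia.
have hs := sum_lt hl.
rewrite /digit.
case: (ltngtP i m) => him; last first.
- subst i. rewrite divnDr ?dvdn_mull // divn_small // mulnK ?qX0 //.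
  by rewrite modn_small // hf.
- lia.
- have -> : q ^ m = q ^ i * q ^ (m - i) by rewrite -expnD subnKC // ltnW.
  rewrite (mulnC (q ^ i)) mulnA divnDr ?dvdn_mull // mulnK ?qX0 //.
  have -> : q ^ (m - i) = q * q ^ (m - i).-1 by rewrite -expnS prednK // subn_gt0.
  rewrite mulnCA addnC [q * _]mulnC modnMDl.
  by have := IH hl him; rewrite /digit.
Qed.

Lemma digits_eq n a b : (forall l, l < n -> digit q a l = digit q b l) ->
  a < q ^ n -> b < q ^ n -> a = b.
Proof.
move=> h ha hb.
rewrite -(modn_small ha) -(modn_small hb) !mod_digits.
by apply: eq_bigr => l _; rewrite h.
Qed.

Lemma top_lt m j : j < (q - 1) * q ^ m -> digit q j m < q - 1.
Proof.
move=> hj; rewrite /digit.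
have h : j %/ q ^ m < q - 1 by rewrite ltn_divLR ?qX0.
by rewrite modn_small //; lia.
Qed.

Lemma modq_ne a c : a < q -> c < q - 1 -> (a + c + 1) %% q != a.
Proof.
move=> ha hc.
case: (ltnP (a + c + 1) q) => h.
  rewrite modn_small //; lia.
have -> : a + c + 1 = (a + c + 1 - q) + q by rewrite subnK.
rewrite modnDr modn_small; lia.
Qed.
End Arith.


Lemma sum_split a b (F : nat -> nat) :
  \sum_(0 <= k < a * b) F k = \sum_(0 <= x < a) \sum_(0 <= y < b) F (x * b + y).
Proof.
elim: a => [|a IH]; first by rewrite mul0n !big_geq.
rewrite big_nat_recr //= -IH (big_cat_nat (n := a * b)) //=; last by rewrite leq_mul2r leqnSn orbT.
congr (_ + _).
rewrite -{1}(add0n (a * b)) big_addn mulSn addnC addKn.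
by apply: eq_bigr => i _; rewrite addnC.
Qed.

Lemma sum_eq1 t n : t < n -> \sum_(0 <= y < n) (y == t : nat) = 1.
Proof.
move=> ht.
  rewrite -(big_mkcond (fun y => y == t)) /= sum1_count.
  have := count_uniq_mem t (iota_uniq 0 n); rewrite mem_iota ht /= => <-.
  by rewrite /index_iota subn0; apply: eq_count => y.
Qed.

Lemma sum_ne t n : t < n -> \sum_(0 <= y < n) (y != t : nat) = n.-1.
Proof.
move=> ht.
have h1 := sum_eq1 ht.
have h2 : \sum_(0 <= y < n) (y != t : nat) + \sum_(0 <= y < n) (y == t : nat) = n.
  rewrite -big_split /= -{2}(subn0 n) -(muln1 (n - 0)) -sum_nat_const_nat.
  by apply: eq_bigr => i _; case: eqP.
lia.
Qed.

Lemma sum_all_eq (S g : nat) (f : nat -> nat) :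
  (forall s, s < S -> f s <= g) -> \sum_(s < S) f s = S * g ->
  forall s, s < S -> f s = g.
Proof.
move=> hle hsum.
have h : \sum_(s < S) (g - f s) = 0.
  have : \sum_(s < S) f s + \sum_(s < S) (g - f s) = S * g.
    rewrite -big_split /=.
    rewrite (eq_bigr (fun _ => g)); first by rewrite sum_nat_const card_ord.
    by move=> i _; rewrite subnKC // hle.
  lia.
move=> s hs.
move/eqP: h; rewrite sum_nat_eq0 => /forallP /(_ (Ordinal hs)) /= /eqP h.
have := hle s hs; lia.
Qed.

Lemma card_sumP (T : finType) (P : pred T) : #|[set x | P x]| = \sum_(x : T) (P x : nat).
Proof. rewrite -sum1dep_card big_mkcond /=; apply: eq_bigr => x _; by case: (P x). Qed.


Section Main.
Variables q m : nat.
Hypothesis hq : 2 <= q.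
Hypothesis hm : 0 < m.

Definition cond j k := if k %/ q < m then digit q j (k %/ q) == k %% q
  else (\sum_(l < m.+1) digit q j l) %% q == (k %% q + q - 1) %% q.
Definition ent j k l := if k %/ q < m then
   (if l == k %/ q then (digit q j (k %/ q) + digit q j m + 1) %% q else digit q j l)
  else digit q j l.

Lemma B_eq j k : B q m j k = if cond j k then Some (\sum_(l < m) ent j k l * q ^ l) else None.
Proof.
rewrite /B /cond /ent; case: ifP => hu; case: ifP => // _.
all: try by congr Some; apply: eq_bigr => l _.
Qed.

Lemma ent_lt j k l : ent j k l < q.
Proof. rewrite /ent; case: ifP => _; try case: ifP => _; by rewrite ?digit_lt ?ltn_pmod ?q0. Qed.

Lemma B_some j k s : B q m j k = Some s -> cond j k /\ s = \sum_(l < m) ent j k l * q ^ l.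
Proof. by rewrite B_eq; case: ifP => // c [<-]. Qed.

Lemma B_ent j1 k1 j2 k2 s : B q m j1 k1 = Some s -> B q m j2 k2 = Some s ->
  forall l, l < m -> ent j1 k1 l = ent j2 k2 l.
Proof.
move=> /B_some [_ e1] /B_some [_ e2] l hl.
rewrite -(digit_sum hq (f := ent j1 k1) (m := m)) //; last by move=> *; apply: ent_lt.
rewrite -e1 e2 digit_sum //; by move=> *; apply: ent_lt.
Qed.

Lemma sumd j : \sum_(l < m.+1) digit q j l = \sum_(l < m) digit q j l + digit q j m.
Proof. by rewrite big_ord_recr. Qed.

Lemma mod_add_ne x c : 0 < c < q -> (x + c) %% q != x %% q.
Proof.
move=> hc; rewrite -{2}(addn0 x) eqn_modDl mod0n modn_small //; lia.
Qed.

Lemma modeq_small a b : a < q -> b < q -> (a == b %[mod q]) -> a = b.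
Proof. by move=> ha hb; rewrite !modn_small // => /eqP. Qed.

Lemma lt_pred a : a < q - 1 -> a < q.
Proof. move=> h; apply: (leq_trans h); exact: leq_subr. Qed.

Definition F := (q - 1) * q ^ m.

Lemma jeq j1 j2 : j1 < F -> j2 < F -> (forall l, l <= m -> digit q j1 l = digit q j2 l) -> j1 = j2.
Proof.
move=> h1 h2 h; apply: (digits_eq hq (n := m.+1)).
- by move=> l hl; apply: h.
- apply: (leq_trans h1); rewrite expnS leq_mul2r; apply/orP; right; lia.
- apply: (leq_trans h2); rewrite expnS leq_mul2r; apply/orP; right; lia.
Qed.

Lemma keq k1 k2 : k1 %/ q = k2 %/ q -> k1 %% q = k2 %% q -> k1 = k2.
Proof. by move=> e1 e2; rewrite (divn_eq k1 q) (divn_eq k2 q) e1 e2. Qed.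


Lemma c3_ll j1 j2 k1 k2 : j1 < F -> j2 < F ->
  k1 %/ q < m -> k2 %/ q < m ->
  cond j1 k1 -> cond j2 k2 -> (forall l, l < m -> ent j1 k1 l = ent j2 k2 l) ->
  (j1, k1) <> (j2, k2) ->
  [/\ j1 <> j2, k1 <> k2, ~~ cond j1 k2 & ~~ cond j2 k1].
Proof.
move=> hj1 hj2 hu1 hu2 c1 c2 he hne.
rewrite /cond hu1 in c1; rewrite /cond hu2 in c2; move/eqP in c1; move/eqP in c2.
rewrite /cond hu1 hu2.
have ht1 := top_lt hq hj1; have ht2 := top_lt hq hj2.
have hv1 : k1 %% q < q by rewrite ltn_pmod // q0.
have hv2 : k2 %% q < q by rewrite ltn_pmod // q0.
have hd := digit_lt hq.
case: (eqVneq (k1 %/ q) (k2 %/ q)) => hu.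
- have e := he _ hu1; rewrite /ent hu1 hu2 hu !eqxx in e.
  have ho : forall l, l < m -> l != k2 %/ q -> digit q j1 l = digit q j2 l.
    move=> l hl hl2; have := he _ hl; rewrite /ent hu1 hu2 hu.
    by rewrite (negbTE hl2).
  rewrite -hu in c2.
  case: (eqVneq (k1 %% q) (k2 %% q)) => hv.
  + exfalso; apply: hne.
    have et : digit q j1 m = digit q j2 m.
      apply: modeq_small; [exact: lt_pred | exact: lt_pred |].
      move: e; rewrite -hu c1 c2 hv => /eqP.
      by rewrite -!addnA eqn_modDl eqn_modDr.
    have ej : j1 = j2.
      apply: jeq => // l; rewrite leq_eqVlt => /orP [/eqP -> //| hl].
      case: (eqVneq l (k2 %/ q)) => hl2; last by apply: ho.
      by rewrite hl2 -hu c1 c2 hv.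
    by rewrite ej (keq hu hv).
  + split.
    * by move=> ej; move: hv; rewrite -c1 -c2 ej eqxx.
    * by move=> ek; move: hv; rewrite ek eqxx.
    * by rewrite -hu c1.
    * by rewrite hu -(hu) c2 eq_sym.
- have e1 := he _ hu1; rewrite /ent hu1 hu2 eqxx (negbTE hu) in e1.
  have e2 := he _ hu2; rewrite /ent hu1 hu2 eqxx eq_sym (negbTE hu) in e2.
  have n1 := modq_ne hq (hd j1 (k1 %/ q)) ht1.
  have n2 := modq_ne hq (hd j2 (k2 %/ q)) ht2.
  rewrite e1 in n1; rewrite -e2 in n2.
  split.
  + by move=> ej; move: n1; rewrite ej eqxx.
  + by move=> ek; move: hu; rewrite ek eqxx.
  + by rewrite -c2.
  + by rewrite -c1.
Qed.


Lemma c3_lm j1 j2 k1 k2 : j1 < F -> j2 < F ->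
  k1 %/ q < m -> ~~ (k2 %/ q < m) ->
  cond j1 k1 -> cond j2 k2 -> (forall l, l < m -> ent j1 k1 l = ent j2 k2 l) ->
  [/\ j1 <> j2, k1 <> k2, ~~ cond j1 k2 & ~~ cond j2 k1].
Proof.
move=> hj1 hj2 hu1 hu2 c1 c2 he.
rewrite /cond hu1 in c1; rewrite /cond (negbTE hu2) in c2; move/eqP in c1.
rewrite /cond hu1 (negbTE hu2).
have ht1 := top_lt hq hj1; have ht2 := top_lt hq hj2.
have hd := digit_lt hq.
have e1 := he _ hu1; rewrite /ent hu1 (negbTE hu2) eqxx in e1.
have n1 := modq_ne hq (hd j1 (k1 %/ q)) ht1.
rewrite e1 in n1.
split.
- by move=> ej; move: n1; rewrite ej eqxx.
- by move=> ek; move: hu2; rewrite -ek hu1.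
- rewrite -(eqP c2) !sumd.
  have eS2 : \sum_(l < m) digit q j2 l =
     \sum_(l < m | l != Ordinal hu1) digit q j1 l + (digit q j1 (k1 %/ q) + digit q j1 m + 1) %% q.
    rewrite (eq_bigr (fun l : 'I_m => ent j1 k1 l)); last first.
      by move=> l _; rewrite he // /ent (negbTE hu2).
    rewrite (bigD1 (Ordinal hu1)) //= addnC /ent hu1 eqxx; congr (_ + _).
    by apply: eq_bigr => l hl; rewrite ifN.
  have key : forall R d t1 t2, t2 < q - 1 ->
      (d + (R + t1)) %% q != (R + (d + t1 + 1) %% q + t2) %% q.
    move=> R d t1 t2 h.
    have -> : (R + (d + t1 + 1) %% q + t2) %% q = ((d + (R + t1)) + (1 + t2)) %% q.
      by rewrite addnAC modnDmr; congr (_ %% _); lia.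
    rewrite eq_sym mod_add_ne //; lia.
  rewrite eS2 (bigD1 (Ordinal hu1)) //= -addnA.
  exact: key.
- by move: n1; rewrite c1.
Qed.


Lemma u_le k : k < q * m.+1 -> k %/ q <= m.
Proof. by move=> hk; rewrite -ltnS ltn_divLR ?q0 // mulnC. Qed.

Lemma c3_mm j1 j2 k1 k2 : j1 < F -> j2 < F -> k1 < q * m.+1 -> k2 < q * m.+1 ->
  ~~ (k1 %/ q < m) -> ~~ (k2 %/ q < m) ->
  cond j1 k1 -> cond j2 k2 -> (forall l, l < m -> ent j1 k1 l = ent j2 k2 l) ->
  (j1, k1) <> (j2, k2) ->
  [/\ j1 <> j2, k1 <> k2, ~~ cond j1 k2 & ~~ cond j2 k1].
Proof.
move=> hj1 hj2 hk1 hk2 hu1 hu2 c1 c2 he hne.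
rewrite /cond (negbTE hu1) in c1; rewrite /cond (negbTE hu2) in c2.
rewrite /cond (negbTE hu1) (negbTE hu2).
have ht1 := top_lt hq hj1; have ht2 := top_lt hq hj2.
have hv1 : k1 %% q < q by rewrite ltn_pmod // q0.
have hv2 : k2 %% q < q by rewrite ltn_pmod // q0.
have hu : k1 %/ q = k2 %/ q.
  have e1 : k1 %/ q = m by apply/eqP; rewrite eqn_leq u_le // leqNgt hu1.
  have e2 : k2 %/ q = m by apply/eqP; rewrite eqn_leq u_le // leqNgt hu2.
  by rewrite e1 e2.
have ho : forall l, l < m -> digit q j1 l = digit q j2 l.
  by move=> l hl; have := he _ hl; rewrite /ent (negbTE hu1) (negbTE hu2).
have eS : \sum_(l < m) digit q j2 l = \sum_(l < m) digit q j1 l.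
  by apply: eq_bigr => l _; rewrite ho.
rewrite !sumd eS in c1 c2 *.
set S := \sum_(l < m) digit q j1 l in c1 c2 *.
have qq : forall v, v + q - 1 = v + (q - 1) by move=> v; rewrite addnBA ?q0.
case: (eqVneq (k1 %% q) (k2 %% q)) => hv.
- exfalso; apply: hne.
  have et : digit q j1 m = digit q j2 m.
    apply: modeq_small; [exact: lt_pred | exact: lt_pred |].
    by move: c1; rewrite hv -(eqP c2) eqn_modDl.
  have ej : j1 = j2.
    apply: jeq => // l; rewrite leq_eqVlt => /orP [/eqP -> //| hl].
    by apply: ho.
  by rewrite ej (keq hu hv).
- have hvv : (k1 %% q + q - 1) %% q != (k2 %% q + q - 1) %% q.
    rewrite !qq; apply/negP => /eqP h; move: hv.
    by rewrite (modeq_small hv1 hv2) ?eqxx // -(eqn_modDr (q - 1)) h.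
  split.
  + by move=> ej; move: hvv; rewrite -(eqP c1) -(eqP c2) ej eqxx.
  + by move=> ek; move: hv; rewrite ek eqxx.
  + by rewrite (eqP c1).
  + by rewrite (eqP c2) eq_sym.
Qed.


Lemma C3 j1 j2 k1 k2 s : j1 < F -> j2 < F -> k1 < q * m.+1 -> k2 < q * m.+1 ->
  (j1, k1) <> (j2, k2) -> B q m j1 k1 = Some s -> B q m j2 k2 = Some s ->
  [/\ j1 <> j2, k1 <> k2, B q m j1 k2 = None & B q m j2 k1 = None].
Proof.
move=> hj1 hj2 hk1 hk2 hne b1 b2.
have he := B_ent b1 b2.
have [c1 _] := B_some b1; have [c2 _] := B_some b2.
suff [? ? n1 n2] : [/\ j1 <> j2, k1 <> k2, ~~ cond j1 k2 & ~~ cond j2 k1].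
  by split => //; rewrite B_eq ?(negbTE n1) ?(negbTE n2).
case: (boolP (k1 %/ q < m)) => hu1; case: (boolP (k2 %/ q < m)) => hu2.
- exact: c3_ll.
- exact: c3_lm.
- have he' : forall l, l < m -> ent j2 k2 l = ent j1 k1 l by move=> l hl; rewrite he.
  have [a b c d] := c3_lm hj2 hj1 hu2 hu1 c2 c1 he'.
  by split => // e; [apply: a | apply: b].
- exact: c3_mm.
Qed.

Definition tcol s k := if k %/ q < m then digit q s (k %/ q)
  else (\sum_(l < m) digit q s l) %% q.

Lemma col_zero j k s : j < F -> B q m j k = Some s -> k %% q != tcol s k.
Proof.
move=> hj b.
have [c es] := B_some b.
have ds : forall l, l < m -> digit q s l = ent j k l.
  by move=> l hl; rewrite es digit_sum // => *; apply: ent_lt.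
have ht := top_lt hq hj.
rewrite /tcol; move: c; rewrite /cond.
case: ifP => hu.
- move/eqP => c; rewrite ds // /ent hu eqxx c eq_sym.
  apply: modq_ne => //; by rewrite ltn_pmod ?q0.
- move=> c.
  have eS : \sum_(l < m) digit q s l = \sum_(l < m) digit q j l.
    by apply: eq_bigr => l _; rewrite ds // /ent hu.
  rewrite eS; apply/negP => /eqP hv; move: c.
  rewrite sumd hv -modnDml.
  set S := \sum_(l < m) digit q j l.
  have -> : S %% q + q - 1 = S %% q + (q - 1) by rewrite addnBA ?q0.
  rewrite eqn_modDl => h.
  have := modeq_small (lt_pred ht) _ h.
  have hq1 : q - 1 < q by rewrite subn1 prednK ?q0.
  move=> /(_ hq1) e; move: ht; rewrite e ltnn.
  by [].
Qed.


Lemma sum_split_q a (G : nat -> nat -> nat) :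
  \sum_(0 <= j < a * q) G (j %/ q) (j %% q) = \sum_(0 <= x < a) \sum_(0 <= d < q) G x d.
Proof.
rewrite sum_split; apply: eq_bigr => x _; apply: eq_big_nat => d /andP [_ hd].
by rewrite divnMDl ?q0 // divn_small // addn0 modnMDl modn_small.
Qed.

Lemma sum_mid a u (G : nat -> nat) :
  \sum_(0 <= j < a * q ^ u) G (j %/ q ^ u) = q ^ u * \sum_(0 <= x < a) G x.
Proof.
rewrite sum_split big_distrr /=; apply: eq_bigr => x _.
rewrite (eq_big_nat _ _ (F2 := fun _ => G x)); last first.
  by move=> y /andP [_ hy]; rewrite divnMDl ?qX0 // divn_small // addn0.
by rewrite sum_nat_const_nat subn0.
Qed.

Lemma sumd_rec j : \sum_(l < m.+1) digit q j l = j %% q + \sum_(l < m) digit q (j %/ q) l.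
Proof.
rewrite big_ord_recl /= {1}/digit expn0 divn1; congr (_ + _).
apply: eq_bigr => l _; rewrite /digit /= expnS divnMA //.
Qed.

Lemma shift_eq d X c : d < q -> c < q ->
  ((d + X) %% q == c) = (d == (c + (q - X %% q)) %% q).
Proof.
move=> hd hc.
rewrite -{1}(modn_small hc) -(eqn_modDr (q - X %% q)).
have -> : (d + X + (q - X %% q)) %% q = d.
  have e : X + (q - X %% q) = (X %/ q).+1 * q.
    rewrite {1}(divn_eq X q) -addnA subnKC; last by rewrite ltnW // ltn_pmod ?q0.
    by rewrite mulSn addnC.
  by rewrite -addnA e addnC modnMDl modn_small.
by [].
Qed.

Lemma colNone k : k < q * m.+1 ->
  \sum_(j < F) (B q m j k == None : nat) = (q - 1) ^ 2 * q ^ m.-1.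
Proof.
move=> hk.
have eB : forall j, (B q m j k == None) = ~~ cond j k.
  by move=> j; rewrite B_eq; case: (cond j k).
rewrite -(big_mkord xpredT (fun j => (B q m j k == None : nat))).
have hv : k %% q < q by rewrite ltn_pmod ?q0.
case: (boolP (k %/ q < m)) => hu.
- rewrite (eq_bigr (fun j => (~~ (digit q j (k %/ q) == k %% q) : nat))); last first.
    by move=> j _; rewrite eB /cond hu.
  set u := k %/ q in hu *; set v := k %% q in hv *.
  have eF : F = ((q - 1) * q ^ (m - u.+1) * q) * q ^ u.
    rewrite /F -!mulnA -expnS -expnD; congr (_ * q ^ _).
    by rewrite subnK.
  rewrite eF (sum_mid _ _ (fun x => ~~ (x %% q == v) : nat)).
  rewrite (sum_split_q _ (fun _ d => ~~ (d == v) : nat)).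
  rewrite (eq_bigr (fun _ => q.-1)); last by move=> x _; exact: sum_ne.
  rewrite sum_nat_const_nat subn0.
  have e : m.-1 = (m - u.+1) + u by move: hu; clear; lia.
  by rewrite e expnD -subn1 !mulnA; ring.
- rewrite (eq_bigr (fun j => (~~ ((\sum_(l < m.+1) digit q j l) %% q == (k %% q + q - 1) %% q)) : nat)); last first.
    by move=> j _; rewrite eB /cond (negbTE hu).
  set c := (k %% q + q - 1) %% q.
  have hc : c < q by rewrite ltn_pmod ?q0.
  have eF : F = ((q - 1) * q ^ m.-1) * q.
    by rewrite /F -mulnA -expnSr prednK.
  rewrite eF.
  rewrite (eq_bigr (fun j => (~~ ((j %% q + \sum_(l < m) digit q (j %/ q) l) %% q == c)) : nat)); last first.
    by move=> j _; rewrite sumd_rec.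
  rewrite (sum_split_q _ (fun x d => ~~ ((d + \sum_(l < m) digit q x l) %% q == c) : nat)).
  rewrite (eq_bigr (fun _ => q.-1)); last first.
    move=> x _; rewrite -(sum_ne (t := (c + (q - (\sum_(l < m) digit q x l) %% q)) %% q)); last by rewrite ltn_pmod ?q0.
    apply: eq_big_nat => d /andP [_ hd]; by rewrite shift_eq.
  by rewrite sum_nat_const_nat subn0 -!subn1; ring.
Qed.


Lemma colSome_le k s : k < q * m.+1 ->
  \sum_(j < F) (B q m j k == Some s : nat) <= (k %% q != tcol s k).
Proof.
move=> hk.
case: (eqVneq (k %% q) (tcol s k)) => ht /=.
- rewrite leqn0 sum_nat_eq0; apply/forallP => j /=.
  rewrite eqb0; apply/negP => /eqP b.
  by have := col_zero (ltn_ord j) b; rewrite ht eqxx.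
- rewrite -(@card_sumP _ (fun j : 'I_F => B q m j k == Some s)).
  apply/card_le1_eqP => j1 j2; rewrite !inE => /eqP b1 /eqP b2.
  apply: val_inj; apply/eqP; apply/negP => hne.
  have hne' : (val j1, k) <> (val j2, k) by case=> e; move: hne; rewrite (val_inj e) eqxx.
  by have [_ ? _ _] := C3 (ltn_ord j1) (ltn_ord j2) hk hk hne' b1 b2.
Qed.

Lemma cnt_le s : \sum_(k < q * m.+1) \sum_(j < F) (B q m j k == Some s : nat) <= (q - 1) * m.+1.
Proof.
apply: (@leq_trans (\sum_(k < q * m.+1) (k %% q != tcol s k : nat))).
  by apply: leq_sum => k _; apply: colSome_le.
rewrite -(big_mkord xpredT (fun k => (k %% q != tcol s k : nat))) /tcol mulnC.
rewrite (sum_split_q _ (fun x d => (d != (if x < m then digit q s x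
  else (\sum_(l < m) digit q s l) %% q)) : nat)).
rewrite (eq_bigr (fun _ => q.-1)); last first.
  move=> x _; apply: sum_ne; case: ifP => _; by rewrite ?digit_lt ?ltn_pmod ?q0.
by rewrite sum_nat_const_nat subn0 -subn1 mulnC.
Qed.


Lemma B_lt j k s : B q m j k = Some s -> s < q ^ m.
Proof. by move=> /B_some [_ ->]; apply: sum_lt => // *; apply: ent_lt. Qed.

Lemma FZ : F - (q - 1) ^ 2 * q ^ m.-1 = (q - 1) * q ^ m.-1.
Proof.
have e : F = (q - 1) ^ 2 * q ^ m.-1 + (q - 1) * q ^ m.-1.
  rewrite /F -{1}(prednK hm) expnS.
  have hq1 : q = (q - 1).+1 by rewrite subn1 prednK ?q0.
  set X := q ^ m.-1; rewrite {2}hq1; set p := q - 1; ring.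
by rewrite e addKn.
Qed.

Lemma total_cnt : \sum_(s < q ^ m) \sum_(k < q * m.+1) \sum_(j < F) (B q m j k == Some (val s) : nat)
  = q ^ m * ((q - 1) * m.+1).
Proof.
rewrite exchange_big /=.
rewrite (eq_bigr (fun k : 'I_(q * m.+1) => \sum_(j < F) (B q m j k != None : nat))); last first.
  move=> k _; rewrite exchange_big; apply: eq_bigr => j _.
  case E: (B q m j k) => [s0|] /=.
  - have hs0 := B_lt E.
    rewrite -(big_mkord xpredT (fun s => (Some s0 == Some s : nat))).
    rewrite -(sum_eq1 hs0); apply: eq_bigr => s _.
    by rewrite (inj_eq (@Some_inj _)) eq_sym.
  - by rewrite big1.
rewrite (eq_bigr (fun _ => (q - 1) * q ^ m.-1)); last first.
  move=> k _; have h := colNone (ltn_ord k).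
  have h2 : \sum_(j < F) (B q m j k != None : nat) + \sum_(j < F) (B q m j k == None : nat) = F.
    rewrite -big_split /= -[RHS](card_ord F) -sum1_card.
    by apply: eq_bigr => j _; case: (B q m j k).
  set a := \sum_(j < F) (B q m j k != None : nat) in h2 *.
  set b := \sum_(j < F) (B q m j k == None : nat) in h h2.
  by rewrite -FZ -h -h2 addnK.
rewrite sum_nat_const card_ord.
have e : q ^ m = q * q ^ m.-1 by rewrite -expnS prednK.
rewrite e; ring.
Qed.

End Main.

Import GRing.Theory Num.Theory.
Theorem theorem5 (q m : nat) (hq : 2 <= q) (hm : 0 < m) :
  regular_PDA ((q - 1) * m.+1) (q * m.+1) ((q - 1) * q ^ m)
    ((q - 1) ^ 2 * q ^ m.-1) (q ^ m) (B q m)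
  /\ rate ((q - 1) * q ^ m) (q ^ m) = (((q - 1)%N)%:Q)^-1%R.
Proof.
split.
- split.
  + move=> j k; case E: (B q m j k) => [s|] //; exact: (B_lt hq E).
  + move=> k; rewrite card_sumP; exact: (colNone hq hm (ltn_ord k)).
  + move=> s hs; rewrite card_sumP.
    rewrite -(pair_bigA _ (fun (j : 'I_((q - 1) * q ^ m)) (k : 'I_(q * m.+1)) => (B q m j k == Some s : nat))) /=.
    rewrite exchange_big /=.
    apply: (sum_all_eq (S := q ^ m) (g := (q - 1) * m.+1) (f := fun s => \sum_(k < q * m.+1) \sum_(j < (q - 1) * q ^ m) (B q m j k == Some s : nat)) _ _ hs).
    * by move=> s' _; apply: (cnt_le hq hm).
    * exact: (total_cnt hq hm).
  + move=> j1 j2 k1 k2 s hne b1 b2.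
    have hne' : (val j1, val k1) <> (val j2, val k2).
      by case=> e1 e2; apply: hne; rewrite (val_inj e1) (val_inj e2).
    have [a b c d] := C3 hq hm (ltn_ord j1) (ltn_ord j2) (ltn_ord k1) (ltn_ord k2) hne' b1 b2.
    by split => // e; [apply: a | apply: b]; rewrite e.
- have h1 : ((((q - 1)%N)%:Q) != 0)%R by rewrite intr_eq0 eqz_nat -lt0n subn_gt0.
  have h2 : (((q ^ m)%N)%:Q != 0)%R.
    by rewrite intr_eq0 eqz_nat -lt0n expn_gt0 (leq_trans _ hq).
  rewrite /rate PoszM intrM; field; by rewrite h1 h2.
Qed.
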